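(* Let $H=\langle a,b \mid c=[b,a],\ [c,a]=[c,b]=1\rangle$, in which every element is uniquely of the form $a^mb^nc^k$ with $m,n,k\in\mathbb{Z}$. The function $\phi\colon H\to\mathbb{R}$ defined by $\phi(a^mb^nc^k)=mn-2k$ satisfies $\phi(1)=0$ and $\phi(xy)+\phi(xy^{-1})=2\phi(x)$ for all $x,y\in H$, i.e. $\phi\in J_0(H)$.
   Context: $[x,y]=x^{-1}y^{-1}xy$. $J_0(H)$ denotes the space of functions $f\colon H\to\mathbb{R}$ with $f(xy)+f(xy^{-1})=2f(x)$ for all $x,y\in H$ and $f(1)=0$. *)

(* Defs.v *)
From Stdlib Require Import ZArith Reals.

(* Every element is uniquely a^m b^n c^k; we
   represent a^m b^n c^k by the triple (m, n, k).  From c = b^-1 a^-1 b a we get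
   b a = a b c, hence b^n a^m' = a^m' b^n c^(n m'), which gives the product below. *)
Record Heis := mkH { hm : Z; hn : Z; hk : Z }.

Definition hone : Heis := mkH 0 0 0.

Definition hmul (x y : Heis) : Heis :=
  mkH (hm x + hm y) (hn x + hn y) (hk x + hk y + hn x * hm y).

Definition hinv (x : Heis) : Heis :=
  mkH (- hm x) (- hn x) (hm x * hn x - hk x).

Definition ha : Heis := mkH 1 0 0.
Definition hb : Heis := mkH 0 1 0.
Definition hc : Heis := mkH 0 0 1.

Definition hcomm (x y : Heis) : Heis := hmul (hmul (hmul (hinv x) (hinv y)) x) y.

Definition hpow_nat (x : Heis) (n : nat) : Heis := Nat.iter n (hmul x) hone.
Definition hpow (x : Heis) (z : Z) : Heis :=
  match z with
  | Z0 => hone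
  | Zpos p => hpow_nat x (Pos.to_nat p)
  | Zneg p => hpow_nat (hinv x) (Pos.to_nat p)
  end.

Definition J0 (f : Heis -> R) : Prop :=
  f hone = 0%R /\
  forall x y : Heis, (f (hmul x y) + f (hmul x (hinv y)) = 2 * f x)%R.

(* Main.v *)
Require Import Defs.
From Stdlib Require Import ZArith Reals Lia Lra.

Lemma hpow_S x n : hpow_nat x (S n) = hmul x (hpow_nat x n).
Proof. reflexivity. Qed.

Lemma pa (a : Z) n : hpow_nat (mkH a 0 0) n = mkH (Z.of_nat n * a) 0 0.
Proof.
  induction n as [|n IH]; [reflexivity|]. rewrite hpow_S.
  rewrite IH; unfold hmul; cbn [hm hn hk]; f_equal; rewrite ?Nat2Z.inj_succ; try ring.
Qed.
Lemma pb (a : Z) n : hpow_nat (mkH 0 a 0) n = mkH 0 (Z.of_nat n * a) 0.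
Proof.
  induction n as [|n IH]; [reflexivity|]. rewrite hpow_S.
  rewrite IH; unfold hmul; cbn [hm hn hk]; f_equal; rewrite ?Nat2Z.inj_succ; try ring.
Qed.
Lemma pc (a : Z) n : hpow_nat (mkH 0 0 a) n = mkH 0 0 (Z.of_nat n * a).
Proof.
  induction n as [|n IH]; [reflexivity|]. rewrite hpow_S.
  rewrite IH; unfold hmul; cbn [hm hn hk]; f_equal; rewrite ?Nat2Z.inj_succ; try ring.
Qed.

Lemma ha_pow m : hpow ha m = mkH m 0 0.
Proof.
  destruct m; cbn [hpow]; [reflexivity| |].
  - unfold ha; rewrite pa, positive_nat_Z; f_equal; try ring; try lia.
  - unfold hinv, ha; cbn [hm hn hk]; replace (1*0-0)%Z with 0%Z by ring; replace (0*1-0)%Z with 0%Z by ring; replace (0*0-1)%Z with (-1)%Z by ring; replace (-0)%Z with 0%Z by ring. rewrite pa, positive_nat_Z; f_equal; try ring; try lia.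
Qed.
Lemma hb_pow m : hpow hb m = mkH 0 m 0.
Proof.
  destruct m; cbn [hpow]; [reflexivity| |].
  - unfold hb; rewrite pb, positive_nat_Z; f_equal; try ring; try lia.
  - unfold hinv, hb; cbn [hm hn hk]; replace (1*0-0)%Z with 0%Z by ring; replace (0*1-0)%Z with 0%Z by ring; replace (0*0-1)%Z with (-1)%Z by ring; replace (-0)%Z with 0%Z by ring. rewrite pb, positive_nat_Z; f_equal; try ring; try lia.
Qed.
Lemma hc_pow m : hpow hc m = mkH 0 0 m.
Proof.
  destruct m; cbn [hpow]; [reflexivity| |].
  - unfold hc; rewrite pc, positive_nat_Z; f_equal; try ring; try lia.
  - unfold hinv, hc; cbn [hm hn hk]; replace (1*0-0)%Z with 0%Z by ring; replace (0*1-0)%Z with 0%Z by ring; replace (0*0-1)%Z with (-1)%Z by ring; replace (-0)%Z with 0%Z by ring. rewrite pc, positive_nat_Z; f_equal; try ring; try lia.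
Qed.

Theorem lemma3p9 (phi : Heis -> R)
  (hphi : forall m n k : Z,
      phi (hmul (hmul (hpow ha m) (hpow hb n)) (hpow hc k)) = IZR (m * n - 2 * k)) :
  J0 phi.
Proof.
  assert (E : forall m n k, phi (mkH m n k) = IZR (m * n - 2 * k)).
  { intros m n k. rewrite <- hphi, ha_pow, hb_pow, hc_pow.
    unfold hmul; simpl; f_equal; f_equal; lia. }
  split.
  - unfold hone; rewrite E; reflexivity.
  - intros [m n k] [p q r]. unfold hmul, hinv; simpl. rewrite !E.
    rewrite <- mult_IZR, <- plus_IZR. f_equal. ring.
Qed.
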